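(* Consider the setting described in the context, for a family $(f^{(D)})_{D\ge1}$ of $(\alpha,\beta)$-class functions. Given $\epsilon,\delta>0$, there exist $\Delta$ and $N$ with $$\Delta=\Omega\big(\epsilon^{1+\frac1\beta}\big),\qquad N=O\Big(\epsilon^{-\frac{1}{2\beta}}\log\big(\epsilon^{-1}\delta^{-1}\big)\Big)$$ such that the following algorithm returns a subnetwork $\hat f$ of $\mathcal{S}[w^\ast_\lambda]$ whose hidden layer has at most $N$ nodes and which, with probability greater than $1-\delta$, satisfies $\sum_{\mathbf{x}}\hat p_{\mathrm{data}}(\mathbf{x})|\mathcal{S}[w^\ast_\lambda](\mathbf{x})-\hat f(\mathbf{x})|^2=O(\epsilon)$. The algorithm: draw $N$ independent samples $(\mathbf{a},b)$ from $p^\ast_{\lambda,\Delta}$, let $\hat{\mathbb{W}}$ be the set of sampled parameters, and set $\hat f(\mathbf{x})=\sum_{(\mathbf{a},b)\in\hat{\mathbb{W}}}\hat w^\ast(\mathbf{a},b)g((\mathbf{a}^\top\mathbf{x}-b)\bmod P)$, where the weights $\hat w^\ast$ on the sampled nodes are trained by convex optimization on the $M$ examples.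
   Context: $P$ is a fixed prime, $\mathbb{Z}_P=\{0,\dots,P-1\}$ with arithmetic mod $P$. $g:\mathbb{Z}_P\to\mathbb{R}$ is an activation function with $\sum_bg(b)=0$, $\sum_b|g(b)|^2=1$. For $w:\mathbb{Z}_P^D\times\mathbb{Z}_P\to\mathbb{R}$, $\mathcal{S}[w](\mathbf{x})=P^{-D/2}\sum_{\mathbf{a}\in\mathbb{Z}_P^D,b\in\mathbb{Z}_P}w(\mathbf{a},b)g((\mathbf{a}^\top\mathbf{x}-b)\bmod P)$; the node with parameter $(\mathbf{a},b)$ has weight $w(\mathbf{a},b)$. For each $D$, $f=f^{(D)}$ is an unknown function, and we are given $M$ examples $(\mathbf{x}_m,f(\mathbf{x}_m))$, $\mathbf{x}_m\in\mathbb{Z}_P^D$, with empirical distribution $\hat p_{\mathrm{data}}$. For $\lambda>0$, $w^\ast_\lambda=\arg\min_w\{\sum_{\mathbf{x}}\hat p_{\mathrm{data}}(\mathbf{x})|f(\mathbf{x})-\mathcal{S}[w](\mathbf{x})|^2+\lambda\sum_{\mathbf{a},b}|P^{-D/2}w(\mathbf{a},b)|^2\}$. Order all $P^{D+1}$ parameters as $(\mathbf{a}_j,b_j)$, $j=1,\dots,P^{D+1}$, so that $|w^\ast_\lambda(\mathbf{a}_1,b_1)|\ge|w^\ast_\lambda(\mathbf{a}_2,b_2)|\ge\cdots$. The family is of $(\alpha,\beta)$-class: there are constants $\alpha,\beta>0$ such that for all $D$ and $j$, $|P^{-D/2}w^\ast_\lambda(\mathbf{a}_j,b_j)|\le\alpha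 j^{-(1+\beta)}$. For $\Delta>0$, $p^\ast_{\lambda,\Delta}(\mathbf{a},b)=\frac1Z\frac{|P^{-D/2}w^\ast_\lambda(\mathbf{a},b)|^2}{|P^{-D/2}w^\ast_\lambda(\mathbf{a},b)|^2+\Delta}$ with $Z$ the normalizing constant. The $O,\Omega$ constants may depend on $\alpha,\beta$ but not on $D$. *)

(* Defs.v *)
From HB Require Import structures.
From mathcomp Require Import all_boot all_order all_algebra.
From mathcomp Require Import all_classical all_reals all_analysis.
Set Implicit Arguments. Unset Strict Implicit. Unset Printing Implicit Defensive.
Import Order.TTheory GRing.Theory Num.Theory.
Local Open Scope ring_scope.

Section Defs.
Variable R : realType.
Variables P D : nat.

(* input space Z_P^D (row vectors over 'Z_P, which is Z/PZ for P prime) *)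
Definition vec := 'rV['Z_P]_D.
Definition param := (vec * 'Z_P)%type.

Definition dotP (a x : vec) : 'Z_P := \sum_i a ord0 i * x ord0 i.

Definition scaleD : R := (Num.sqrt ((P%:R : R) ^+ D))^-1.

Definition node (g : 'Z_P -> R) (t : param) (x : vec) : R := g (dotP t.1 x - t.2).

Definition S (g : 'Z_P -> R) (w : param -> R) (x : vec) : R :=
  scaleD * \sum_t w t * node g t x.

Definition pdata M (xs : 'I_M -> vec) (x : vec) : R :=
  (#|[set m | xs m == x]|)%:R / M%:R.

Definition emp_sqdist M (xs : 'I_M -> vec) (h1 h2 : vec -> R) : R :=
  \sum_x pdata xs x * (h1 x - h2 x) ^+ 2.

Definition ridge_obj (g : 'Z_P -> R) (lam : R) M (xs : 'I_M -> vec)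
    (f : vec -> R) (w : param -> R) : R :=
  emp_sqdist xs f (S g w) + lam * \sum_t (scaleD * w t) ^+ 2.

Definition is_wstar (g : 'Z_P -> R) (lam : R) M (xs : 'I_M -> vec)
    (f : vec -> R) (w : param -> R) : Prop :=
  forall w' : param -> R, ridge_obj g lam xs f w <= ridge_obj g lam xs f w'.

(* (alpha,beta)-class condition on the normalized weights c = P^{-D/2} w*:
   when the parameters are listed as t_1, t_2, ... with |c| nonincreasing,
   |c(t_j)| <= alpha j^{-(1+beta)}  (index j : 'I_n stands for j+1). *)
Definition ab_class (c : param -> R) (alpha beta : R) : Prop :=
  exists s : 'I_#|{: param}| -> param,
    [/\ bijective s,
        (forall i j : 'I_#|{: param}|, (i <= j)%N -> `|c (s j)| <= `|c (s i)|) &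
        (forall j : 'I_#|{: param}|,
            `|c (s j)| <= alpha * ((j.+1)%:R `^ (- (1 + beta))))].

(* p*_{lambda,Delta} built from normalized weights c = P^{-D/2} w* *)
Definition pstar_un (c : param -> R) (Delta : R) (t : param) : R :=
  (c t) ^+ 2 / ((c t) ^+ 2 + Delta).
Definition pstar (c : param -> R) (Delta : R) (t : param) : R :=
  pstar_un c Delta t / \sum_u pstar_un c Delta u.

Definition prob_iid N (p : param -> R) (E : {ffun 'I_N -> param} -> Prop) : R :=
  \sum_(s : {ffun 'I_N -> param}) (\prod_i p (s i)) * (if `[< E s >] then 1 else 0).

Definition sampled N (s : {ffun 'I_N -> param}) : {set param} := [set s i | i : 'I_N].

Definition subnet (g : 'Z_P -> R) (W : {set param}) (v : param -> R) (x : vec) : R :=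
  \sum_(t in W) v t * node g t x.

Definition subnet_obj (g : 'Z_P -> R) (lam : R) M (xs : 'I_M -> vec)
    (f : vec -> R) (W : {set param}) (v : param -> R) : R :=
  emp_sqdist xs f (subnet g W v) + lam * \sum_(t in W) (v t) ^+ 2.

Definition is_trained (g : 'Z_P -> R) (lam : R) M (xs : 'I_M -> vec)
    (f : vec -> R) (W : {set param}) (v : param -> R) : Prop :=
  forall v' : param -> R, subnet_obj g lam xs f W v <= subnet_obj g lam xs f W v'.

End Defs.

(* Main.v *)
Require Import Defs.
From HB Require Import structures.
From mathcomp Require Import all_boot all_order all_algebra.
From mathcomp Require Import all_classical all_reals all_analysis.
From mathcomp Require Import ring lra.
Import Order.TTheory GRing.Theory Num.Theory.
Set Implicit Arguments. Unset Strict Implicit. Unset Printing Implicit Defensive.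
Local Open Scope ring_scope.

Lemma Slin (R : realType) P D (g : 'Z_P -> R) (a d : param P D -> R) (h : R) x :
  S g (fun t => a t + h * d t) x = S g a x + h * S g d x.
Proof.
rewrite /S [h * (_ * _)]mulrCA -mulrDr [h * _]mulr_sumr -big_split /=; congr (_ * _).
by apply: eq_bigr => t _; ring.
Qed.

Definition Gq (R : realType) P D (g : 'Z_P -> R) (lam : R) M (xs : 'I_M -> vec P D)
    (f : vec P D -> R) (a d : param P D -> R) : R :=
  \sum_x pdata R xs x * (-2 * (f x - S g a x) * S g d x) +
  lam * \sum_t (2 * (scaleD R P D * a t) * (scaleD R P D * d t)).

Definition qq (R : realType) P D (g : 'Z_P -> R) (lam : R) M (xs : 'I_M -> vec P D)
    (d : param P D -> R) : R :=
  \sum_x pdata R xs x * (S g d x) ^+ 2 + lam * \sum_t (scaleD R P D * d t) ^+ 2.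

Lemma Qexp (R : realType) P D (g : 'Z_P -> R) (lam : R) M (xs : 'I_M -> vec P D)
    (f : vec P D -> R) (a d : param P D -> R) (h : R) :
  ridge_obj g lam xs f (fun t => a t + h * d t) =
  ridge_obj g lam xs f a + h * Gq g lam xs f a d + h ^+ 2 * qq g lam xs d.
Proof.
rewrite /ridge_obj /Gq /qq /emp_sqdist.
have e1 : \sum_x pdata R xs x * (f x - S g (fun t => a t + h * d t) x) ^+ 2 =
  \sum_x pdata R xs x * (f x - S g a x) ^+ 2 +
  h * \sum_x pdata R xs x * (-2 * (f x - S g a x) * S g d x) +
  h ^+ 2 * \sum_x pdata R xs x * (S g d x) ^+ 2.
  rewrite !mulr_sumr -!big_split /=; apply: eq_bigr => x _; rewrite Slin; ring.
have e2 : \sum_t (scaleD R P D * (a t + h * d t)) ^+ 2 =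
  \sum_t (scaleD R P D * a t) ^+ 2 +
  h * \sum_t (2 * (scaleD R P D * a t) * (scaleD R P D * d t)) +
  h ^+ 2 * \sum_t (scaleD R P D * d t) ^+ 2.
  rewrite !mulr_sumr -!big_split /=; apply: eq_bigr => x _; ring.
rewrite e1 e2; ring.
Qed.

Lemma pdata_ge0 (R : realType) P D M (xs : 'I_M -> vec P D) x : 0 <= pdata R xs x.
Proof. by rewrite /pdata divr_ge0. Qed.

Lemma qq_ge0 (R : realType) P D (g : 'Z_P -> R) (lam : R) M (xs : 'I_M -> vec P D) d :
  0 <= lam -> 0 <= qq g lam xs d.
Proof.
move=> l0; rewrite /qq addr_ge0 ?mulr_ge0 ?sumr_ge0 // => i _.
  by rewrite mulr_ge0 ?pdata_ge0 ?sqr_ge0.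
by rewrite sqr_ge0.
Qed.

Lemma Gzero (R : realType) P D (g : 'Z_P -> R) (lam : R) M (xs : 'I_M -> vec P D)
    (f : vec P D -> R) (w d : param P D -> R) :
  0 <= lam -> is_wstar g lam xs f w -> Gq g lam xs f w d = 0.
Proof.
move=> l0 hw.
set G := Gq g lam xs f w d; set q := qq g lam xs d.
have q0 : 0 <= q by apply: qq_ge0.
have := hw (fun t => w t + (- G / (q + 1)) * d t); rewrite Qexp -/G -/q -addrA.
have -> : (- G / (q + 1)) * G + (- G / (q + 1)) ^+ 2 * q = - (G ^+ 2 / (q+1) ^+ 2) :> R.
  by field; lra.
have : 0 <= G ^+ 2 / (q+1) ^+ 2 by rewrite divr_ge0 ?sqr_ge0.
move=> h1 h2.
have h3 : G ^+ 2 / (q+1) ^+ 2 = 0 by lra.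
move/eqP: h3; rewrite mulf_eq0 invr_eq0 !expf_eq0 /=.
case/orP => /eqP // h; move: q0; rewrite -h; lra.
Qed.

Lemma Qdiff (R : realType) P D (g : 'Z_P -> R) (lam : R) M (xs : 'I_M -> vec P D)
    (f : vec P D -> R) (w w' : param P D -> R) :
  0 <= lam -> is_wstar g lam xs f w ->
  ridge_obj g lam xs f w' = ridge_obj g lam xs f w + qq g lam xs (fun t => w' t - w t).
Proof.
move=> l0 hw.
have -> : w' = (fun t => w t + 1 * (w' t - w t)) by apply: boolp.funext => t; ring.
rewrite Qexp (Gzero _ l0 hw) mulr0 expr1n mul1r addr0.
congr (_ + qq _ _ _ _); apply: boolp.funext => t; ring.
Qed.

Lemma Ssub (R : realType) P D (g : 'Z_P -> R) (a b : param P D -> R) x :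
  S g (fun t => a t - b t) x = S g a x - S g b x.
Proof.
rewrite /S -mulrBr -sumrB /=; congr (_ * _).
by apply: eq_bigr => t _; ring.
Qed.

Lemma scaleD_gt0 (R : realType) P D : (0 < P)%N -> 0 < scaleD R P D.
Proof. by move=> P0; rewrite /scaleD invr_gt0 sqrtr_gt0 exprn_gt0 // ltr0n. Qed.

Definition Phi (R : realType) P D (W : {set param P D}) (v : param P D -> R) :=
  fun t => if t \in W then v t / scaleD R P D else 0.

Lemma subnetS (R : realType) P D (g : 'Z_P -> R) (W : {set param P D}) v x :
  (0 < P)%N -> subnet g W v x = S g (Phi W v) x.
Proof.
move=> P0; have s0 := scaleD_gt0 R D P0.
rewrite /subnet /S big_mkcond mulr_sumr; apply: eq_bigr => t _; rewrite /Phi.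
case: ifP => _; last by rewrite !mul0r mulr0.
by field; rewrite gt_eqF.
Qed.

Lemma objS (R : realType) P D (g : 'Z_P -> R) (lam : R) M (xs : 'I_M -> vec P D)
    (f : vec P D -> R) (W : {set param P D}) v :
  (0 < P)%N -> subnet_obj g lam xs f W v = ridge_obj g lam xs f (Phi W v).
Proof.
move=> P0; have s0 := scaleD_gt0 R D P0.
rewrite /subnet_obj /ridge_obj /emp_sqdist; congr (_ + _ * _).
  by apply: eq_bigr => x _; rewrite subnetS.
rewrite big_mkcond; apply: eq_bigr => t _; rewrite /Phi.
case: ifP => _; last by rewrite mulr0 expr0n.
by congr (_ ^+ 2); field; rewrite gt_eqF.
Qed.

Lemma le_term_sum (R : realType) (T : finType) (F : T -> R) i :
  (forall j, 0 <= F j) -> F i <= \sum_j F j.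
Proof. by move=> h; rewrite (bigD1 i) //= lerDl sumr_ge0. Qed.

Lemma qq_bound (R : realType) P D (g : 'Z_P -> R) (lam : R) M (xs : 'I_M -> vec P D) d :
  0 <= lam -> (forall b, `|g b| <= 1) -> \sum_x pdata R xs x <= 1 ->
  qq g lam xs d <= (1 + lam) * (\sum_t `|scaleD R P D * d t|) ^+ 2.
Proof.
move=> l0 hg hp.
set m := \sum_t `|scaleD R P D * d t|.
have m0 : 0 <= m by rewrite sumr_ge0.
have hS : forall x, `|S g d x| <= m.
  move=> x; rewrite /S mulr_sumr; apply: le_trans (ler_norm_sum _ _ _) _.
  apply: ler_sum => t _; rewrite mulrA normrM.
  have := hg (dotP t.1 x - t.2); rewrite /node => h.
  by rewrite -[X in _ <= X]mulr1 ler_wpM2l.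
have h1 : \sum_x pdata R xs x * S g d x ^+ 2 <= m ^+ 2.
  apply: le_trans (_ : \sum_x pdata R xs x * m ^+ 2 <= _).
    apply: ler_sum => x _; apply: ler_wpM2l; first exact: pdata_ge0.
    have := hS x; rewrite ler_norml => /andP [h2 h3]; nra.
  by rewrite -mulr_suml -[X in _ <= X]mul1r ler_wpM2r // sqr_ge0.
have h2 : \sum_t (scaleD R P D * d t) ^+ 2 <= m ^+ 2.
  rewrite expr2 mulr_suml; apply: ler_sum => t _.
  rewrite -[_ ^+ 2]real_normK ?num_real // expr2 ler_wpM2l //.
  rewrite /m; exact: (@le_term_sum R _ (fun t => `|scaleD R P D * d t|) t (fun j => normr_ge0 _)).
rewrite /qq.
have : lam * \sum_t (scaleD R P D * d t) ^+ 2 <= lam * m ^+ 2 by rewrite ler_wpM2l.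
lra.
Qed.

Lemma g_le1 (R : realType) P (g : 'Z_P -> R) : \sum_b g b ^+ 2 = 1 -> forall b, `|g b| <= 1.
Proof.
move=> h b; have : g b ^+ 2 <= 1.
  rewrite -h; exact: (@le_term_sum R _ (fun b => g b ^+ 2) b (fun j => sqr_ge0 _)).
by move=> h2; rewrite ler_norml; apply/andP; split; nra.
Qed.

Lemma pdata_sum (R : realType) P D M (xs : 'I_M -> vec P D) : \sum_x pdata R xs x <= 1.
Proof.
rewrite /pdata -mulr_suml -natr_sum.
have -> : (\sum_x #|[set m | xs m == x]|)%N = M.
  transitivity (\sum_x \sum_(m : 'I_M) (xs m == x : nat))%N.
    apply: eq_bigr => x _; rewrite -sum1_card big_mkcond /=.
    by apply: eq_bigr => m _; rewrite inE; case: (xs m == x).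
  rewrite exchange_big /= -[RHS]card_ord -sum1_card.
  apply: eq_bigr => m _.
  rewrite (bigD1 (xs m)) //= eqxx big1 // => x /negbTE hx.
  by rewrite eq_sym hx.
have [->|M0] := eqVneq M 0%N; first by rewrite mul0r ler01.
by rewrite divff ?pnatr_eq0.
Qed.

Lemma det (R : realType) P D (g : 'Z_P -> R) (lam : R) M (xs : 'I_M -> vec P D)
    (f : vec P D -> R) (w : param P D -> R) (W : {set param P D}) v :
  0 <= lam -> (0 < P)%N -> (forall b, `|g b| <= 1) ->
  is_wstar g lam xs f w -> is_trained g lam xs f W v ->
  emp_sqdist xs (S g w) (subnet g W v) <=
  (1 + lam) * (\sum_t (if t \in W then 0 else `|scaleD R P D * w t|)) ^+ 2.
Proof.
move=> l0 P0 hg hw hv.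
have s0 := scaleD_gt0 R D P0.
have hp := pdata_sum R xs.
set d' := fun t => Phi W v t - w t.
have e1 : emp_sqdist xs (S g w) (subnet g W v) <= qq g lam xs d'.
  rewrite /emp_sqdist /qq.
  have -> : \sum_x pdata R xs x * (S g w x - subnet g W v x) ^+ 2 =
            \sum_x pdata R xs x * S g d' x ^+ 2.
    apply: eq_bigr => x _; rewrite subnetS // /d' Ssub; congr (_ * _); ring.
  by rewrite lerDl mulr_ge0 // sumr_ge0 // => t _; rewrite sqr_ge0.
have e2 := Qdiff (w:=w) (Phi W v) l0 hw.
set v2 := fun t => scaleD R P D * w t.
have e3 : ridge_obj g lam xs f (Phi W v) <= ridge_obj g lam xs f (Phi W v2).
  by rewrite -!objS //; apply: hv.
have e4 := Qdiff (w:=w) (Phi W v2) l0 hw.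
have e5 := qq_bound (fun t => Phi W v2 t - w t) l0 hg hp.
have e6 : \sum_t `|scaleD R P D * (Phi W v2 t - w t)| =
          \sum_t (if t \in W then 0 else `|scaleD R P D * w t|).
  apply: eq_bigr => t _; rewrite /Phi /v2; case: ifP => _.
    have -> : scaleD R P D * w t / scaleD R P D - w t = 0 by field; rewrite gt_eqF.
    by rewrite mulr0 normr0.
  by rewrite sub0r mulrN normrN.
rewrite e6 in e5.
lra.
Qed.




Lemma powRE' (R : realType) (a r : R) : 0 < a -> a `^ r = expR (r * ln a).
Proof. by move=> a0; rewrite /powR gt_eqF. Qed.

Lemma tele (R : realType) (b x : R) : 0 < b -> 0 < x ->
  b * (x+1) `^ (-(1+b)) <= x `^ (-b) - (x+1) `^ (-b).
Proof.
move=> b0 x0.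
have x10 : 0 < x + 1 by lra.
rewrite !powRE' //.
set l1 := ln x; set l2 := ln (x+1).
have hy : l1 - l2 <= - (x+1)^-1.
  have -> : l1 - l2 = ln (1 + (- (x+1)^-1)).
    rewrite /l1 /l2 -lnV ?posrE // -lnM ?posrE ?invr_gt0 //.
    congr ln; field; lra.
  apply: le_ln1Dx.
  have : (x+1)^-1 < 1 by rewrite invf_lt1 //; lra.
  lra.
have e1 : expR (- b * l1) = expR (- b * l2) * expR (b * (l2 - l1)).
  by rewrite -expRD; congr expR; ring.
have e2 : expR (- (1 + b) * l2) = expR (- b * l2) * (x+1)^-1.
  have -> : (x+1)^-1 = expR (- l2) by rewrite expRN /l2 lnK // posrE.
  rewrite -expRD; congr expR; ring.
rewrite e1 e2.
have := expR_ge1Dx (b * (l2 - l1)).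
have := expR_gt0 (- b * l2).
set E := expR (- b * l2); set F := expR (b * (l2 - l1)).
move=> E0 F1.
have hb : b * (x+1)^-1 <= b * (l2 - l1) by rewrite ler_pM2l //; lra.
have : E * (b * (x+1)^-1) <= E * (F - 1) by rewrite ler_pM2l //; lra.
lra.
Qed.

Lemma minsum (R : realType) (b al th : R) (J n : nat) (a : nat -> R) :
  0 < b -> 0 < al -> 0 <= th -> (0 < J)%N ->
  (forall k, a k <= al * (k.+1%:R) `^ (-(1+b))) ->
  \sum_(j < n) Num.min th (a j) <=
    (minn n J)%:R * th + al * (J%:R `^ (-b) - (maxn J n)%:R `^ (-b)) / b.
Proof.
move=> b0 al0 th0 J0 ha; elim: n => [|n IH].
  by rewrite big_ord0 min0n maxn0 subrr mulr0 mul0r mul0r addr0.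
rewrite big_ord_recr /=.
case: (ltnP n J) => hnJ.
  have e1 : minn n.+1 J = n.+1 by apply/minn_idPl.
  have e2 : minn n J = n by apply/minn_idPl/ltnW.
  have e3 : maxn J n.+1 = J by apply/maxn_idPl.
  have e4 : maxn J n = J by apply/maxn_idPl/ltnW.
  rewrite e1 e3; rewrite e2 e4 in IH.
  have hm : Num.min th (a n) <= th by rewrite ge_min lexx.
  rewrite -natr1 mulrDl mul1r; lra.
have e1 : minn n.+1 J = J by apply/minn_idPr/(leq_trans hnJ).
have e2 : minn n J = J by apply/minn_idPr.
have e3 : maxn J n.+1 = n.+1 by apply/maxn_idPr/(leq_trans hnJ).
have e4 : maxn J n = n by apply/maxn_idPr.
rewrite e1 e3; rewrite e2 e4 in IH.
have hm : Num.min th (a n) <= a n by rewrite ge_min lexx orbT.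
have n0 : (0 < n%:R :> R) by rewrite ltr0n (leq_trans J0).
have ht := @tele R b n%:R b0 n0.
have := ha n; rewrite -natr1 => han.
have : al * (b * (n%:R + 1) `^ (- (1 + b))) <= al * (n%:R `^ (- b) - (n%:R + 1) `^ (- b)).
  by rewrite ler_pM2l.
move=> h2.
have h3 : al * (n%:R + 1) `^ (- (1 + b)) <= al * (n%:R `^ (- b) - (n%:R + 1) `^ (- b)) / b.
  rewrite ler_pdivlMr // mulrC mulrA [b * al]mulrC -mulrA //.
idtac.
set A := al * (n%:R + 1) `^ (- (1 + b)).
set B := al * (n%:R `^ (- b) - (n%:R + 1) `^ (- b)) / b.
have -> : al * (J%:R `^ (- b) - (n%:R + 1) `^ (- b)) / b =
   al * (J%:R `^ (- b) - n%:R `^ (- b)) / b + B by rewrite /B; field; lra.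
rewrite addrA; apply: lerD => //.
exact: le_trans hm (le_trans han h3).
Qed.


Lemma sum_ne (R : realType) (T : finType) (p : T -> R) t :
  \sum_j p j * (j != t)%:R = \sum_j p j - p t.
Proof.
rewrite [in RHS](bigD1 t) //= [in LHS](bigD1 t) //= eqxx mulr0 add0r.
have -> : \sum_(j | j != t) p j * (j != t)%:R = \sum_(j | j != t) p j.
  by apply: eq_bigr => j ->; rewrite mulr1.
ring.
Qed.

Lemma union_bound (R : realType) P D N (p : param P D -> R) (I : {set param P D})
    (E : {ffun 'I_N -> param P D} -> Prop) :
  (forall t, 0 <= p t) -> \sum_t p t = 1 ->
  (forall s, (forall t, t \in I -> t \in sampled s) -> E s) ->
  1 - \sum_(t in I) (1 - p t) ^+ N <= prob_iid p E.
Proof.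
move=> p0 p1 hE.
rewrite /prob_iid.
have h1 : \sum_(s : {ffun 'I_N -> param P D}) \prod_i p (s i) = 1.
  by rewrite -(bigA_distr_bigA (fun _ j => p j)) /= p1 prodr_const expr1n.
have h2 : forall t, \sum_(s : {ffun 'I_N -> param P D}) \prod_i (p (s i) * (s i != t)%:R)
            = (1 - p t) ^+ N.
  move=> t; rewrite -(bigA_distr_bigA (fun _ j => p j * (j != t)%:R)) /=.
  by rewrite sum_ne p1 prodr_const card_ord.
apply: le_trans (_ : \sum_(s : {ffun 'I_N -> param P D})
   (\prod_i p (s i) - \sum_(t in I) \prod_i (p (s i) * (s i != t)%:R)) <= _).
  rewrite sumrB h1 exchange_big /=; apply: lerB => //.
  by rewrite le_eqVlt; apply/orP; left; apply/eqP; apply: eq_bigr => t _; rewrite h2.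
apply: ler_sum => s _.
have hp : 0 <= \prod_i p (s i) by apply: prodr_ge0.
case: (boolP [forall t, (t \in I) ==> (t \in sampled s)]) => hall.
  have hEs : E s by apply: hE => t ht; move/forallP: hall => /(_ t); rewrite ht.
  have -> : `[< E s >] = true by apply/asboolP.
  rewrite mulr1 lerBlDr lerDl sumr_ge0 // => t _.
  by apply: prodr_ge0 => i _; rewrite mulr_ge0.
move/forallPn: hall => [t]; rewrite negb_imply => /andP [ht hns].
have e : \prod_i (p (s i) * (s i != t)%:R) = \prod_i p (s i).
  apply: eq_bigr => i _.
  have -> : (s i != t) = true.
    apply/negP => /eqP hst; move: hns; rewrite /sampled; move/negP; apply.
    by apply/imsetP; exists i.
  by rewrite mulr1.
rewrite (bigD1 t) //= e opprD addrA subrr sub0r.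
apply: le_trans (_ : 0 <= _); last first.
  by rewrite mulr_ge0 //; case: `[< E s >].
rewrite oppr_le0 sumr_ge0 // => u _.
by apply: prodr_ge0 => i _; rewrite mulr_ge0.
Qed.

Lemma pu_le (R : realType) (x th : R) : 0 < th ->
  x ^+ 2 / (x ^+ 2 + th ^+ 2) <= Num.min th `|x| / th.
Proof.
move=> th0.
have hs : 0 < x ^+ 2 + th ^+ 2 by rewrite ltr_wpDl ?sqr_ge0 ?exprn_gt0.
have [h|h] := lerP th `|x|.
  rewrite divff ?gt_eqF // ler_pdivrMr // mul1r.
  by rewrite lerDl sqr_ge0.
rewrite ler_pdivrMr // mulrAC ler_pdivlMr //.
rewrite -real_normK ?num_real //.
set a := `|x|.
have a0 : 0 <= a by rewrite normr_ge0.
have h3 : 0 <= a * (a ^+ 2 - a * th + th ^+ 2).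
  apply: mulr_ge0 => //; nra.
nra.
Qed.

Lemma abs_min (R : realType) (x th : R) : 0 <= th -> x ^+ 2 < th ^+ 2 ->
  `|x| = Num.min th `|x|.
Proof.
move=> th0; rewrite -real_normK ?num_real // => h.
have a0 : 0 <= `|x| by rewrite normr_ge0.
have : `|x| <= th by nra.
by move=> h2; rewrite (min_idPr h2).
Qed.

Lemma prob0 (R : realType) P D (p : param P D -> R) (E : {ffun 'I_0 -> param P D} -> Prop) :
  (forall s, E s) -> prob_iid p E = 1.
Proof.
move=> hE; rewrite /prob_iid.
set s0 : {ffun 'I_0 -> param P D} := [ffun => (0, 0)].
rewrite (bigD1 s0) //= big1; last by case.
rewrite mul1r big1 ?addr0.
  by have -> : `[< E s0 >] = true by apply/asboolP.
move=> s hs; exfalso; move/eqP: hs; apply; apply/ffunP => -[i hi].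
by [].
Qed.

Lemma sampling (R : realType) P D (pu : param P D -> R) (I : {set param P D})
    (E : forall N, {ffun 'I_N -> param P D} -> Prop) (C1 C2 K L Z delta : R) :
  (forall t, 0 <= pu t) -> Z = \sum_t pu t -> 0 < Z -> Z <= C1 * K ->
  (forall t, t \in I -> 1/2 <= pu t) -> 1 <= K -> 1 <= L -> 0 < C1 -> 0 < C2 ->
  0 < delta ->
  ln (2 * C1) + ln K - ln delta <= C2 * L ->
  (forall N s, (forall t, t \in I -> t \in sampled s) -> E N s) ->
  exists N : nat, N%:R <= (2 * C1 * C2 + 1) * K * L /\
    1 - delta < prob_iid (fun t => pu t / Z) (E N).
Proof.
move=> pu0 Ze Zp Zle puI K1 L1 C10 C20 d0 hC hE.
have K0 : 0 < K by lra.
pose Q := 2 * C1 * K.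
have Q0 : 0 < Q by rewrite /Q !mulr_gt0.
pose x := Q * C2 * L.
have x0 : 0 <= x by rewrite /x !mulr_ge0 // ltW //; lra.
pose N := (Num.truncn x).+1.
have /andP [Nx1 Nx2] : x < N%:R <= x + 1.
  have := archimedean.Num.Theory.truncn_itv x0; rewrite /N -natr1.
  by move=> /andP [h1 h2]; apply/andP; split; lra.
exists N; split.
  have KL : 1 <= K * L by have := ler_pM ler01 ler01 K1 L1; rewrite mul1r.
  rewrite /x /Q in Nx2; lra.
pose p := fun t => pu t / Z.
have puZ : forall t, pu t <= Z.
  by move=> t; rewrite Ze; apply: (@le_term_sum R _ pu t pu0).
have p0 : forall t, 0 <= p t by move=> t; rewrite /p divr_ge0 // ltW.
have p1 : \sum_t p t = 1.
  by rewrite /p -mulr_suml -Ze divff // gt_eqF.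
apply: (lt_le_trans _ (union_bound (I := I) p0 p1 (hE N))).
pose e' := expR (- (N%:R / (2 * Z))).
have Z2 : 0 < 2 * Z by rewrite mulr_gt0.
have hpt : forall t, t \in I -> (1 - p t) ^+ N <= e'.
  move=> t ht.
  have hp1 : p t <= 1 by rewrite /p ler_pdivrMr // mul1r.
  have hp2 : (2 * Z)^-1 <= p t.
    rewrite /p ler_pdivlMr //.
    have -> : (2 * Z)^-1 * Z = 1 / 2 by field; rewrite gt_eqF.
    exact: puI.
  apply: le_trans (_ : expR (- p t) ^+ N <= _).
    apply: lerXn2r; rewrite ?nnegrE ?expR_ge0 //; first lra.
    have := expR_ge1Dx (- p t); lra.
  rewrite -expRM_natr ler_expR mulNr lerN2 mulrC.
  by rewrite ler_wpM2r // ?ler0n.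
have hcard : (#|I|)%:R <= 2 * Z.
  rewrite -sum1_card natr_sum.
  apply: le_trans (_ : \sum_(t in I) 2 * pu t <= _).
    by apply: ler_sum => t ht; have := puI t ht; lra.
  rewrite -mulr_sumr Ze ler_wpM2l // big_mkcond /=.
  by apply: ler_sum => t _; case: ifP.
have hsum : \sum_(t in I) (1 - p t) ^+ N <= 2 * Z * e'.
  apply: le_trans (_ : \sum_(t in I) e' <= _); first exact: ler_sum.
  rewrite sumr_const -[e' *+ _]mulr_natl; apply: ler_wpM2r => //.
  exact: ltW (expR_gt0 _).
have hQ : 2 * Z * e' <= Q * expR (- (N%:R / Q)).
  apply: ler_pM.
  - exact: ltW.
  - exact: ltW (expR_gt0 _).
  - by rewrite /Q -mulrA ler_wpM2l.
  rewrite ler_expR lerN2 ler_wpM2l ?ler0n //.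
  by rewrite lef_pV2 ?posrE // /Q -mulrA ler_wpM2l.
have lnQ : ln Q = ln (2 * C1) + ln K by rewrite /Q lnM ?posrE ?mulr_gt0.
have hx : Q * (ln Q - ln delta) <= x.
  rewrite /x -mulrA; apply: ler_wpM2l; [exact: ltW | rewrite lnQ; lra].
have hlt : Q * expR (- (N%:R / Q)) < delta.
  have h1 : ln Q - ln delta < N%:R / Q.
    by rewrite ltr_pdivlMr // mulrC; apply: le_lt_trans hx Nx1.
  have h2 : expR (- (N%:R / Q)) < delta / Q.
    rewrite -[X in _ < X]lnK ?posrE ?divr_gt0 // ltr_expR.
    rewrite lnM ?posrE ?invr_gt0 // lnV ?posrE //; lra.
  by move: h2; rewrite ltr_pdivlMr // mulrC.
lra.
Qed.

Unset Implicit Arguments.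

Theorem theorem5 (R : realType) (lam alpha beta : R) :
  0 < lam -> 0 < alpha -> 0 < beta ->
  exists cD cN cE : R, [/\ 0 < cD, 0 < cN, 0 < cE &
  forall (P : nat) (g : 'Z_P -> R), prime P ->
    \sum_b g b = 0 -> \sum_b g b ^+ 2 = 1 ->
  forall (D M : nat) (xs : 'I_M -> vec P D) (f : vec P D -> R)
         (wstar : param P D -> R),
    (0 < D)%N ->
    is_wstar g lam xs f wstar ->
    ab_class (fun t => scaleD R P D * wstar t) alpha beta ->
  forall eps delta : R, 0 < eps < 1 -> 0 < delta < 1 ->
  exists (Delta : R) (N : nat),
    [/\ 0 < Delta,
        cD * eps `^ (1 + beta^-1) <= Delta,
        N%:R <= cN * eps `^ (- (2 * beta)^-1) * ln ((eps * delta)^-1) &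
        1 - delta <
        prob_iid (pstar (fun t => scaleD R P D * wstar t) Delta)
          (fun s : {ffun 'I_N -> param P D} => forall v : param P D -> R,
             is_trained g lam xs f (sampled s) v ->
             emp_sqdist xs (S g wstar) (subnet g (sampled s) v) <= cE * eps)]].
Proof.
move=> l0 a0 b0.
set C1 := 2 + alpha / beta.
set B := alpha + alpha / beta.
set C2 := ln (2 * C1) + (2 * beta)^-1 + 1.
have ab0 : 0 <= alpha / beta by rewrite divr_ge0 // ltW.
have C1ge : 2 <= C1 by rewrite /C1; lra.
have lnC : 0 <= ln (2 * C1) by apply: ln_ge0; lra.
have ib0 : 0 < (2 * beta)^-1 by rewrite invr_gt0 mulr_gt0.
have C2p : 0 < C2 by rewrite /C2; lra.
have B0 : 0 < B by rewrite /B; lra.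
exists 1, (2 * C1 * C2 + 1), ((1 + lam) * (C1 ^+ 2 + expR 1 * B ^+ 2)).
split => //.
- have : 0 < C1 * C2 by rewrite mulr_gt0 //; lra.
  lra.
- apply: mulr_gt0; first lra.
  have : 0 < C1 ^+ 2 by rewrite exprn_gt0 //; lra.
  have : 0 <= expR 1 * B ^+ 2 by rewrite mulr_ge0 ?sqr_ge0 // ltW ?expR_gt0.
  lra.
move=> P g Pp gs g2 D M xs f w D0 hw [s [sbij _ sbd]] eps delta /andP[e0 e1] /andP[d0 d1].
have P0 : (0 < P)%N := prime_gt0 Pp.
have hg := g_le1 g2.
set c := fun t => scaleD R P D * w t.
set n := #|{: param P D}|.
pose a := fun k : nat => match (insub k : option 'I_n) with Some j => `|c (s j)| | None => 0 end.
have ha : forall k, a k <= alpha * (k.+1)%:R `^ (-(1+beta)).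
  move=> k; rewrite /a; case: insubP => [j _ hj|_].
    by rewrite -hj; apply: sbd.
  by rewrite mulr_ge0 ?powR_ge0 // ltW.
have Tsum : forall F : R -> R, \sum_t F `|c t| = \sum_(j < n) F (a j).
  move=> F; rewrite (reindex s); last exact: onW_bij.
  by apply: eq_bigr => j _; rewrite /a valK.
have Lsum : forall th (J : nat), 0 <= th -> (0 < J)%N ->
    \sum_t Num.min th `|c t| <= J%:R * th + alpha * J%:R `^ (-beta) / beta.
  move=> th J th0 J0; rewrite (Tsum (fun y => Num.min th y)).
  apply: le_trans (@minsum R beta alpha th J n a b0 a0 th0 J0 ha) _.
  apply: lerD.
    by rewrite ler_wpM2r // ler_nat geq_minr.
  rewrite ler_pdivrMr // divfK ?gt_eqF //; apply: ler_wpM2l; first exact: ltW.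
  by rewrite gerBl powR_ge0.
set u := ln eps.
have u0 : u < 0 by apply: ln_lt0; rewrite e0 e1.
have epsu : expR u = eps by rewrite /u lnK // posrE.
set K := eps `^ (- (2 * beta)^-1).
have Ke : K = expR (- (2 * beta)^-1 * u) by rewrite /K powRE'.
have K1 : 1 <= K.
  rewrite Ke; apply: le_trans (expR_ge1Dx _); rewrite lerDl.
  by rewrite mulr_le0 // ?oppr_le0 ltW.
have K0 : 0 < K by lra.
have lnK' : ln K = - (2 * beta)^-1 * u by rewrite Ke expRK.
set Delta := eps `^ (1 + beta^-1).
have De : Delta = expR ((1 + beta^-1) * u) by rewrite /Delta powRE'.
have D0' : 0 < Delta by rewrite De expR_gt0.
set th := expR ((1 + beta^-1) * u / 2).
have th0 : 0 < th by apply: expR_gt0.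
have thD : th ^+ 2 = Delta.
  by rewrite /th -expRM_natl De; congr (expR _); field; rewrite ?pnatr_eq0 ?gt_eqF.
set r := expR (u / 2).
have r0 : 0 < r by apply: expR_gt0.
have r2 : r ^+ 2 = eps.
  by rewrite /r -expRM_natl -epsu; congr (expR _); field; rewrite ?pnatr_eq0 ?gt_eqF.
have Kth : K * th = r.
  rewrite Ke /th /r -expRD; congr (expR _); field; rewrite gt_eqF //.
set J := (Num.truncn K).+1.
have KJ : K < J%:R <= K + 1.
  have := archimedean.Num.Theory.truncn_itv (ltW K0); rewrite /J -natr1.
  by move=> /andP [h1 h2]; apply/andP; split; lra.
have /andP [KJ1 KJ2] := KJ.
have Jb : J%:R `^ (- beta) <= r.
  rewrite powRE' ?ltr0n // /r ler_expR.
  have : ln K <= ln J%:R by rewrite ler_ln ?posrE ?ltr0n //; lra.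
  rewrite lnK' => h.
  have -> : u / 2 = - beta * (- (2 * beta)^-1 * u) by field; rewrite ?pnatr_eq0 ?gt_eqF.
  nra.
have Lmain : \sum_t Num.min th `|c t| <= C1 * r.
  apply: le_trans (Lsum th J (ltW th0) isT) _.
  have h1 : J%:R * th <= 2 * r by rewrite -Kth; nra.
  have h2 : alpha * J%:R `^ (- beta) / beta <= alpha / beta * r.
    by rewrite mulrAC; apply: ler_wpM2l.
  rewrite /C1 mulrDl; lra.
have powle1 : forall k : nat, (k.+1)%:R `^ (- (1 + beta)) <= 1 :> R.
  move=> k; rewrite powRE' ?ltr0n // -[X in _ <= X]expR0 ler_expR.
  have : 0 <= ln (k.+1%:R : R) by apply: ln_ge0; rewrite ler1n.
  move=> h; rewrite mulNr oppr_le0; apply: mulr_ge0 => //; lra.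
have Bmain : \sum_t `|c t| <= B.
  have -> : \sum_t `|c t| = \sum_t Num.min alpha `|c t|.
    rewrite (Tsum id) (Tsum (fun y => Num.min alpha y)); apply: eq_bigr => j _ /=.
    have : a j <= alpha by apply: le_trans (ha j) _; rewrite -[X in _ <= X]mulr1 ler_wpM2l ?(ltW a0) ?powle1.
    by move=> h; rewrite (min_idPr h).
  apply: le_trans (Lsum alpha 1%N (ltW a0) isT) _.
  by rewrite powR1 mul1r mulr1 /B.
set Z := \sum_t pstar_un (fun t => scaleD R P D * w t) Delta t.
set I := [set t | Delta <= c t ^+ 2].
have pu0 : forall t, 0 <= pstar_un c Delta t.
  by move=> t; rewrite /pstar_un divr_ge0 ?sqr_ge0 // addr_ge0 ?sqr_ge0 // ltW.
have puI : forall t, t \in I -> 1/2 <= pstar_un c Delta t.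
  move=> t; rewrite inE /pstar_un => h.
  have h0 : 0 < c t ^+ 2 + Delta by rewrite ltr_wpDl ?sqr_ge0.
  rewrite ler_pdivlMr //; lra.
have puZ : forall t, pstar_un c Delta t <= Z.
  by move=> t; apply: (@le_term_sum R _ (fun t => pstar_un c Delta t) t pu0).
have Zle : Z <= C1 * K.
  apply: le_trans (_ : \sum_t Num.min th `|c t| / th <= _).
    apply: ler_sum => t _; rewrite /pstar_un -thD.
    exact: pu_le.
  by rewrite -mulr_suml ler_pdivrMr // -mulrA Kth.
have Isub : forall W : {set param P D}, (forall t, t \in I -> t \in W) ->
    \sum_t (if t \in W then 0 else `|c t|) <= C1 * r.
  move=> W hW; apply: le_trans Lmain; apply: ler_sum => t _.
  case: ifP => htW.
    by rewrite le_min normr_ge0 ltW.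
  have htI : t \notin I by apply/negP => /hW; rewrite htW.
  rewrite inE -thD -ltNge in htI.
  by rewrite -abs_min // ltW.
have cE0 : 0 <= (1 + lam) by lra.
have evI : forall N (s' : {ffun 'I_N -> param P D}), (forall t, t \in I -> t \in sampled s') ->
    forall v, is_trained g lam xs f (sampled s') v ->
    emp_sqdist xs (S g w) (subnet g (sampled s') v) <= (1 + lam) * (C1 ^+ 2 + expR 1 * B ^+ 2) * eps.
  move=> N s' hI v hv.
  apply: le_trans (det (ltW l0) P0 hg hw hv) _.
  have h1 := Isub _ hI.
  have h0 : 0 <= \sum_t (if t \in sampled s' then 0 else `|c t|).
    by apply: sumr_ge0 => t _; case: ifP.
  have h2 : (\sum_t (if t \in sampled s' then 0 else `|c t|)) ^+ 2 <= C1 ^+ 2 * eps.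
    rewrite -r2 -exprMn; apply: lerXn2r; rewrite ?nnegrE //; lra.
  have h3 : 0 <= expR 1 * B ^+ 2 * eps by rewrite !mulr_ge0 ?sqr_ge0 // ltW ?expR_gt0.
  rewrite -mulrA; apply: ler_wpM2l => //; rewrite mulrDl; lra.
set L := ln ((eps * delta)^-1).
have ed0 : 0 < eps * delta by rewrite mulr_gt0.
have lnd : ln delta < 0 by apply: ln_lt0; rewrite d0 d1.
have Le : L = - u - ln delta.
  by rewrite /L lnV ?posrE // lnM ?posrE //; rewrite opprD.
have L0 : 0 < L by rewrite Le; lra.
have cN0 : 0 <= (2 * C1 * C2 + 1) * K * L.
  have : 0 < C1 * C2 by rewrite mulr_gt0 //; lra.
  move=> h; apply: mulr_ge0; last exact: ltW.
  apply: mulr_ge0; last exact: ltW.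
  lra.
case: (ltrP L 1) => hL.
  exists Delta, 0%N; split => //; first by rewrite mul1r.
  rewrite prob0; first lra.
  move=> s' v hv; apply: le_trans (det (ltW l0) P0 hg hw hv) _.
  have h0 : 0 <= \sum_t (if t \in sampled s' then 0 else `|c t|).
    by apply: sumr_ge0 => t _; case: ifP.
  have h1 : \sum_t (if t \in sampled s' then 0 else `|c t|) <= B.
    apply: le_trans Bmain; apply: ler_sum => t _; case: ifP => // _.
  have h2 : (\sum_t (if t \in sampled s' then 0 else `|c t|)) ^+ 2 <= B ^+ 2.
    by apply: lerXn2r; rewrite ?nnegrE //; lra.
  have ue : -1 < u by rewrite Le in hL; lra.
  have ee : 1 <= expR 1 * eps.
    rewrite -epsu -expRD -[X in X <= _]expR0 ler_expR; lra.
  have h3 : B ^+ 2 <= expR 1 * B ^+ 2 * eps.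
    rewrite mulrAC -[X in X <= _]mul1r ler_wpM2r ?sqr_ge0 //.
  have h4 : 0 <= C1 ^+ 2 * eps by rewrite mulr_ge0 ?sqr_ge0 // ltW.
  rewrite -mulrA; apply: ler_wpM2l => //; rewrite mulrDl; lra.
have [Zp|Zn] := ltrP 0 Z; last first.
  exists Delta, 0%N; split => //; first by rewrite mul1r.
  rewrite prob0; first lra.
  move=> s'; apply: evI => t ht.
  have := puI t ht; have := puZ t; lra.
have hC : ln (2 * C1) + ln K - ln delta <= C2 * L.
  have h1 : ln (2 * C1) <= ln (2 * C1) * L.
    by rewrite -[X in X <= _]mulr1 ler_wpM2l.
  have h2 : (2 * beta)^-1 * (- u) <= (2 * beta)^-1 * L.
    by rewrite ler_wpM2l ?ltW //; rewrite Le; clear -lnd; lra.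
  have h3 : - ln delta <= L by rewrite Le; clear -u0; lra.
  have e : C2 * L = ln (2 * C1) * L + (2 * beta)^-1 * L + L by rewrite /C2; ring.
  have e2 : ln K = - ((2 * beta)^-1 * u) by rewrite lnK' mulNr.
  rewrite mulrN in h2; rewrite e e2; clear -h1 h2 h3; lra.
have C1p : 0 < C1 by lra.
have [N [hN hP]] := @sampling R P D (pstar_un c Delta) I
  (fun N (s' : {ffun 'I_N -> param P D}) => forall v, is_trained g lam xs f (sampled s') v ->
     emp_sqdist xs (S g w) (subnet g (sampled s') v) <= (1 + lam) * (C1 ^+ 2 + expR 1 * B ^+ 2) * eps)
  C1 C2 K L Z delta pu0 erefl Zp Zle puI K1 hL C1p C2p d0 hC evI.
exists Delta, N; split => //; first by rewrite mul1r.
Qed.
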